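(* Let $G=(V,E)$ be the bipartite graph with $V=\{v_1,\dots,v_{10}\}$ and the 14 edges $\{v_1,v_6\},\{v_1,v_7\},\{v_2,v_6\},\{v_2,v_7\},\{v_2,v_8\},\{v_3,v_7\},\{v_3,v_9\},\{v_3,v_{10}\},\{v_4,v_8\},\{v_4,v_9\},\{v_4,v_{10}\},\{v_5,v_8\},\{v_5,v_9\},\{v_5,v_{10}\}$, and let $R=\{\{v_2,v_7\},\{v_4,v_9\},\{v_5,v_{10}\}\}$. Let $y\in\mathbb{R}^E$ be given by $y_{\{v_1,v_6\}}=\frac23$ and $y_e=\frac13$ for all other $e\in E$. Then $y\in Q_{(G,R)}$.
   Context: For a bipartite graph $G=(V,E)$ with $|V|=2n$ (here $n=5$) and red edges $R$, let $\mathcal{L}_{\mathrm{all}}(G)$ be the set of labelings $L\colon V\to\{0,1\}$ with $|L^{-1}(1)|\equiv n\pmod 2$, and $E_L=\{\{u,v\}\in E\setminus R\colon L(u)=L(v)\}\cup\{\{u,v\}\in R\colon L(u)\ne L(v)\}$. Then $Q_{(G,R)}=\{x\in\mathbb{R}^E_{\ge0}\colon x(\delta(u))=1\ \forall u\in V,\ x(E_L)\ge1\ \forall L\in\mathcal{L}_{\mathrm{all}}(G)\}$, where $\delta(u)$ is the set of edges at $u$ and $x(S)=\sum_{e\in S}x_e$. *)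

(* Defs.v *)
From HB Require Import structures.
From mathcomp Require Import all_boot all_order all_algebra.
Set Implicit Arguments. Unset Strict Implicit. Unset Printing Implicit Defensive.
Import Order.TTheory GRing.Theory Num.Theory.
Local Open Scope ring_scope.

(* A (bipartite) graph is given by a finite vertex type V, a finite edge type E,
   and the endpoints  ends e = (u, v)  of each edge e = {u, v}.
   red : pred E is the set R of red edges. *)

Definition incident (V E : finType) (ends : E -> V * V) (u : V) (e : E) : bool :=
  ((ends e).1 == u) || ((ends e).2 == u).

Definition in_EL (V E : finType) (ends : E -> V * V) (red : pred E)
  (L : {ffun V -> bool}) (e : E) : bool :=
  if red e then L (ends e).1 != L (ends e).2 else L (ends e).1 == L (ends e).2.

Definition L_all (V : finType) (n : nat) (L : {ffun V -> bool}) : bool :=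
  odd #|[set v | L v]| == odd n.

Definition in_Q (R : realFieldType) (V E : finType) (ends : E -> V * V)
  (red : pred E) (n : nat) (x : E -> R) : Prop :=
  [/\ (forall e, 0 <= x e),
      (forall u : V, \sum_(e | incident ends u e) x e = 1) &
      (forall L : {ffun V -> bool}, L_all n L ->
         1 <= \sum_(e | in_EL ends red L e) x e)].

(* The concrete graph of Lemma 19: vertex v_i is the ordinal i-1 of 'I_10. *)
Definition G19_edges : seq (nat * nat) :=
  [:: (1,6); (1,7); (2,6); (2,7); (2,8); (3,7); (3,9); (3,10);
      (4,8); (4,9); (4,10); (5,8); (5,9); (5,10)].

Definition G19_ends (e : 'I_14) : 'I_10 * 'I_10 :=
  let p := nth (0,0)%N G19_edges e in (inord (p.1.-1), inord (p.2.-1)).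

Definition G19_red : pred 'I_14 :=
  fun e => nth (0,0)%N G19_edges e \in [:: (2,7); (4,9); (5,10)]%N.

Definition y19 (R : realFieldType) (e : 'I_14) : R :=
  if nth (0,0)%N G19_edges e == (1,6)%N then 2 / 3 else 1 / 3.

(* Main.v *)
Require Import Defs.
From mathcomp Require Import all_boot all_order all_algebra.
Import Order.TTheory GRing.Theory Num.Theory.
Import Order.TTheory GRing.Theory Num.Theory.

Definition wn (i : nat) : nat := if nth (0,0)%N G19_edges i == (1,6)%N then 2 else 1.
Definition hEL (f : nat -> bool) (i : nat) : bool :=
  let p := nth (0,0)%N G19_edges i in
  if p \in [:: (2,7); (4,9); (5,10)]%N then f p.1.-1 != f p.2.-1 else f p.1.-1 == f p.2.-1.

Lemma key (f : nat -> bool) : odd (\sum_(0 <= i < 10) f i) = odd 5 ->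
  (3 <= \sum_(0 <= i < 14) hEL f i * wn i)%N.
Proof.
rewrite /hEL /wn unlock /=.
case: (f 0%N); case: (f 1%N); case: (f 2%N); case: (f 3%N); case: (f 4%N);
case: (f 5%N); case: (f 6%N); case: (f 7%N); case: (f 8%N); case: (f 9%N); by [].
Qed.

Lemma sum14 (F : 'I_14 -> nat) : (\sum_(e < 14) F e = \sum_(0 <= i < 14) F (inord i))%N.
Proof. rewrite big_mkord; apply: eq_bigr => i _; by rewrite inord_val. Qed.
Lemma sum10 (F : 'I_10 -> nat) : (\sum_(e < 10) F e = \sum_(0 <= i < 10) F (inord i))%N.
Proof. rewrite big_mkord; apply: eq_bigr => i _; by rewrite inord_val. Qed.

Definition hInc (m i : nat) : bool :=
  let p := nth (0,0)%N G19_edges i in (p.1.-1 == m) || (p.2.-1 == m).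

Lemma bnd i : ((nth (0,0)%N G19_edges i).1.-1 < 10 /\ (nth (0,0)%N G19_edges i).2.-1 < 10)%N.
Proof. do 14! (case: i => [|i]; first by []). by case: i. Qed.

Lemma incE (u : 'I_10) (e : 'I_14) : incident G19_ends u e = hInc u e.
Proof.
rewrite /incident /G19_ends /hInc /=. have [h1 h2] := bnd e.
by rewrite -!val_eqE /= !inordK.
Qed.

Lemma deg (u : 'I_10) : (\sum_(e < 14) incident G19_ends u e * wn e = 3)%N.
Proof.
under eq_bigr => e _ do rewrite incE.
rewrite -(big_mkord xpredT (fun i => hInc u i * wn i)).
case: u => m Hm /=.
do 10! (case: m Hm => [|m] Hm; first by rewrite unlock).
by [].
Qed.

Local Open Scope ring_scope.

Lemma yE (R : realFieldType) (e : 'I_14) : y19 R e = (wn e)%:R / 3.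
Proof. by rewrite /y19 /wn; case: ifP. Qed.

Lemma sumE (R : realFieldType) (P : pred 'I_14) :
  \sum_(e | P e) y19 R e = (\sum_(e < 14) P e * wn e)%N%:R / 3.
Proof.
rewrite natr_sum mulr_suml big_mkcond /=; apply: eq_bigr => e _.
by rewrite yE; case: (P e); rewrite /= ?mul1n ?mul0n ?mul0r.
Qed.

Theorem lemma19 (R : realFieldType) :
  in_Q G19_ends G19_red 5 (@y19 R).
Proof.
split.
- by move=> e; rewrite yE divr_ge0 // ler0n.
- move=> u; rewrite (sumE R (incident G19_ends u)) deg divff //.
  by rewrite pnatr_eq0.
- move=> L HL; rewrite (sumE R (in_EL G19_ends G19_red L)).
  rewrite ler_pdivlMr ?ltr0n // mul1r ler_nat.
  pose f := fun k => L (inord k).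
  have -> : (\sum_(e < 14) in_EL G19_ends G19_red L e * wn e
            = \sum_(0 <= i < 14) hEL f i * wn i)%N by rewrite big_mkord.
  apply: key.
  have Hc : #|[set v | L v]| = (\sum_(0 <= i < 10) f i)%N.
    rewrite cardsE -sum1_card big_mkcond sum10 /=; apply: eq_bigr => i _.
    rewrite unfold_in; by case: (L (inord i)).
  by move: HL; rewrite /L_all Hc => /eqP.
Qed.
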